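(* Let $u\in\mathbb{R}^3$ with $\kappa(u)>2$. Then there exists $\gamma\in\Gamma$ such that $\tilde u=\gamma u=(\tilde x,\tilde y,\tilde z)$ satisfies either $\tilde u\in(-\infty,-2]^3$, or $\tilde x\in[-2,2]$. (In the first case $\tilde u$ is the character of a Fuchsian representation whose quotient is a hyperbolic three-holed sphere, with boundary corresponding to cusps or closed geodesics; in the second, $\tilde u$ is the character of a representation mapping $X$ to a non-hyperbolic element.)
   Context: $\kappa(x,y,z)=x^2+y^2+z^2-xyz-2$. $\Gamma$ denotes the group of polynomial automorphisms of $\mathbb{C}^3$ generated by: all permutations of the coordinates $x,y,z$; the three sign changes $(x,y,z)\mapsto(x,-y,-z)$, $(x,y,z)\mapsto(-x,y,-z)$, $(x,y,z)\mapsto(-x,-y,z)$; and the quadratic reflection $(x,y,z)\mapsto(yz-x,y,z)$. Every element of $\Gamma$ preserves $\kappa$ and maps $\mathbb{R}^3$ to itself. A point $(x,y,z)$ is viewed as the character $(\mathrm{tr}\rho(X),\mathrm{tr}\rho(Y),\mathrm{tr}\rho(XY))$ of a representation $\rho$ of the free group $\langle X,Y\rangle$ into $\mathrm{SL}(2,\mathbb{C})$. *)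

(* Defs.v *)
From Stdlib Require Import Reals.
Open Scope R_scope.

Definition pt : Type := (R * R * R)%type.

Definition kappa (u : pt) : R :=
  let '(x, y, z) := u in x^2 + y^2 + z^2 - x*y*z - 2.

(* Generators of Gamma, as maps of R^3 (they are polynomial automorphisms of
   C^3 with real coefficients; we record their action on R^3). *)
Definition swap_xy (u : pt) : pt := let '(x, y, z) := u in (y, x, z).
Definition swap_yz (u : pt) : pt := let '(x, y, z) := u in (x, z, y).
Definition swap_xz (u : pt) : pt := let '(x, y, z) := u in (z, y, x).
Definition cyc1 (u : pt) : pt := let '(x, y, z) := u in (y, z, x).
Definition cyc2 (u : pt) : pt := let '(x, y, z) := u in (z, x, y).
Definition sign_x (u : pt) : pt := let '(x, y, z) := u in (x, -y, -z).
Definition sign_y (u : pt) : pt := let '(x, y, z) := u in (-x, y, -z).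
Definition sign_z (u : pt) : pt := let '(x, y, z) := u in (-x, -y, z).
Definition refl_x (u : pt) : pt := let '(x, y, z) := u in (y*z - x, y, z).

Inductive generator : (pt -> pt) -> Prop :=
  | gen_swap_xy : generator swap_xy
  | gen_swap_yz : generator swap_yz
  | gen_swap_xz : generator swap_xz
  | gen_cyc1 : generator cyc1
  | gen_cyc2 : generator cyc2
  | gen_sign_x : generator sign_x
  | gen_sign_y : generator sign_y
  | gen_sign_z : generator sign_z
  | gen_refl_x : generator refl_x.

(* Every generator's inverse is
   again a generator (involutions; cyc1 and cyc2 are mutually inverse), so the
   generated group is the monoid of finite compositions of generators. *)
Inductive Gamma : (pt -> pt) -> Prop :=
  | Gamma_id : Gamma (fun u => u)
  | Gamma_gen (g : pt -> pt) (f : pt -> pt) :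
      generator g -> Gamma f -> Gamma (fun u => g (f u)).

(* Main.v *)
Require Import Defs.
From Stdlib Require Import Reals Lra Psatz.
Open Scope R_scope.

Lemma Gamma_comp (g f : pt -> pt) : Gamma g -> Gamma f -> Gamma (fun u => g (f u)).
Proof.
  intros Hg Hf. induction Hg as [| g0 f0 Hgen Hf0 IH].
  - exact Hf.
  - exact (Gamma_gen g0 (fun u => f0 (f u)) Hgen IH).
Qed.

Definition Gd (u : pt) : Prop :=
  exists gamma : pt -> pt, Gamma gamma /\
    exists xt yt zt : R, gamma u = (xt, yt, zt) /\
      ((xt <= -2 /\ yt <= -2 /\ zt <= -2) \/ (-2 <= xt <= 2)).

Lemma G_step (g : pt -> pt) (u : pt) : generator g -> Gd (g u) -> Gd u.
Proof.
  intros Hg [gm [Hgm H]].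
  exists (fun v => gm (g v)). split.
  - apply Gamma_comp; [exact Hgm|]. exact (Gamma_gen g (fun v => v) Hg Gamma_id).
  - exact H.
Qed.

Lemma done1 x y z : -2 <= x <= 2 -> Gd (x, y, z).
Proof. intros H. exists (fun u => u). split; [constructor|]. exists x, y, z. auto. Qed.

Lemma done2 x y z : x <= -2 -> y <= -2 -> z <= -2 -> Gd (x, y, z).
Proof. intros. exists (fun u => u). split; [constructor|]. exists x, y, z. auto. Qed.

Lemma sorted_step c d x y z : 0 < c -> 0 < d -> d <= 1 -> d <= c ->
  kappa (x, y, z) = 2 + c -> x >= y -> y >= z -> z > 2 ->
  (y*z - x) + d <= x.
Proof.
  intros Hc Hd1 Hd2 Hd3 K Hxy Hyz Hz. unfold kappa in K.
  assert (F : 2*y^2 - y^2*z + z^2 - 4 - c < 0).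
  { assert (A : (y - z) * (y + z) * (z - 2) >= 0).
    { apply Rle_ge. apply Rmult_le_pos; [apply Rmult_le_pos|]; lra. }
    assert (B : (z-2)^2*(z+1) >= 0).
    { apply Rle_ge. apply Rmult_le_pos; [apply pow2_ge_0|]; lra. }
    nra. }
  assert (P : (y - x) * (y - (y*z - x)) < 0) by nra.
  assert (Hyx : y < x).
  { destruct (Rle_lt_or_eq_dec y x) as [h|h]; [lra|exact h|].
    subst. nra. }
  assert (Ht : 0 < x - (y*z - x)) by nra.
  assert (T2 : (x - (y*z - x))^2 >= 4*c).
  { assert (A : (y^2-4)*(z^2-4) >= 0).
    { apply Rle_ge. apply Rmult_le_pos; nra. }
    nra. }
  set (t := x - (y*z - x)) in *.
  destruct (Rle_lt_dec d t) as [h|h]; [unfold t in h; lra|].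
  exfalso. nra.
Qed.

Lemma descent c d : 0 < c -> 0 < d -> d <= 1 -> d <= c ->
  forall n x y z, kappa (x, y, z) = 2 + c -> x > 2 -> y > 2 -> z > 2 ->
  x + y + z <= INR n * d -> Gd (x, y, z).
Proof.
  intros Hc Hd1 Hd2 Hd3 n. induction n as [|n IH]; intros x y z K Hx Hy Hz Sm.
  - simpl in Sm. lra.
  - assert (H : forall a b e, kappa (a, b, e) = 2 + c -> a >= b -> b >= e -> e > 2 ->
               a + b + e <= INR (S n) * d -> Gd (a, b, e)).
    { intros a b e Ka Hab Hbe He Sa.
      pose proof (sorted_step c d a b e Hc Hd1 Hd2 Hd3 Ka Hab Hbe He) as St.
      apply (G_step refl_x); [constructor|]. simpl.
      destruct (Rle_dec (b*e - a) 2) as [h1|h1].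
      - destruct (Rle_dec (-2) (b*e - a)) as [h2|h2].
        + apply done1. lra.
        + apply (G_step sign_x); [constructor|]. simpl. apply done2; lra.
      - apply IH.
        + unfold kappa in *. nra.
        + lra.
        + lra.
        + lra.
        + rewrite S_INR in Sa. lra. }
    unfold kappa in K.
    destruct (Rle_dec y x); destruct (Rle_dec z y); destruct (Rle_dec z x).
    + apply H; unfold kappa; lra.
    + lra.
    + apply (G_step swap_yz); [constructor|]. simpl. apply H; unfold kappa; lra.
    + apply (G_step cyc2); [constructor|]. simpl. apply H; unfold kappa; lra.
    + apply (G_step swap_xy); [constructor|]. simpl. apply H; unfold kappa; lra.
    + apply (G_step cyc1); [constructor|]. simpl. apply H; unfold kappa; lra.
    + lra.
    + apply (G_step swap_xz); [constructor|]. simpl. apply H; unfold kappa; lra.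
Qed.

Lemma positive x y z : kappa (x, y, z) > 2 -> x > 2 -> y > 2 -> z > 2 -> Gd (x, y, z).
Proof.
  intros K Hx Hy Hz.
  set (c := kappa (x, y, z) - 2).
  assert (Hc : 0 < c) by (unfold c; lra).
  set (d := Rmin 1 c).
  assert (Hd : 0 < d) by (apply Rmin_pos; lra).
  destruct (INR_archimed d (x + y + z)) as [n Hn]; [lra|].
  apply (descent c d Hc Hd (Rmin_l _ _) (Rmin_r _ _) n); try lra.
  unfold c. lra.
Qed.

Theorem mainTheorem10 (x y z : R) :
  kappa (x, y, z) > 2 ->
  exists gamma : pt -> pt, Gamma gamma /\
    exists xt yt zt : R, gamma (x, y, z) = (xt, yt, zt) /\
      ((xt <= -2 /\ yt <= -2 /\ zt <= -2) \/ (-2 <= xt <= 2)).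
Proof.
  intros K. change (Gd (x, y, z)).
  destruct (Rle_dec (-2) x); [destruct (Rle_dec x 2); [apply done1; lra|]|].
  all: destruct (Rle_dec (-2) y); [destruct (Rle_dec y 2);
      [apply (G_step swap_xy); [constructor|]; simpl; apply done1; lra|]|].
  all: destruct (Rle_dec (-2) z); [destruct (Rle_dec z 2);
      [apply (G_step swap_xz); [constructor|]; simpl; apply done1; lra|]|].
  all: unfold kappa in K.
  all: try (apply positive; unfold kappa; lra).
  all: try (apply done2; lra).
  all: try (apply (G_step sign_x); [constructor|]; simpl;
            first [apply done2; lra | apply positive; unfold kappa; lra]).
  all: try (apply (G_step sign_y); [constructor|]; simpl;
            first [apply done2; lra | apply positive; unfold kappa; lra]).
  all: try (apply (G_step sign_z); [constructor|]; simpl;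
            first [apply done2; lra | apply positive; unfold kappa; lra]).
Qed.
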